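(* Let $\mathcal C$ be the UM simplex $(n,k)$ code and $s\ge0$. Then the binary block code generated by $G_{\rm total}$ (whose nodes are the coordinates of $c_{\rm total}=(c_0,\dots,c_{s+1})=u_{\rm total}G_{\rm total}$) has the Easy Repair Property.
   Context: Let $k\ge2$ and let $G\in\mathbb F_2^{k\times(2^k-1)}$ be a generator matrix of the binary simplex code (columns are all distinct nonzero vectors of $\mathbb F_2^k$); set $n=2(2^k-1)$. The UM simplex $(n,k)$ code is the binary convolutional code with encoder $G(D)=G_0+G_1D$, $G_0=[G\ G]$, $G_1=[G\ 0]\in\mathbb F_2^{k\times n}$. For $u_{\rm total}=(u_0,\dots,u_s)\in\mathbb F_2^{(s+1)k}$, $c_{\rm total}=u_{\rm total}G_{\rm total}$, where $G_{\rm total}\in\mathbb F_2^{(s+1)k\times(s+2)n}$ is the block matrix whose $i$-th block row ($i=0,\dots,s$) has $G_0$ in block column $i$, $G_1$ in block column $i+1$ and zeros elsewhere. Nodes are the coordinates of $c_{\rm total}$, corresponding to the columns $g_1,\dots,g_N$ of $G_{\rm total}$. An erasure pattern is a set $S^e$ of erased nodes; the others are live. It is correctable if no two distinct codewords coincide on all live positions. A node $c_i$ is related to distinct nodes $c_{j_1},\dots,c_{j_\gamma}$ (all different from $c_i$) if $g_i=g_{j_1}+\dots+g_{j_\gamma}$. An erased node allows for easy repair if it is related to $\gamma\le2$ live nodes. An erasure pattern allows for easy repair if all erased nodes can be recovered by a sequence of easy repairs, where after each step the recovered node is regarded as live. A code has the Easy Repair Property if every correctable erasure pattern allows for easy repair.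 *)

(* Defs.v *)
From mathcomp Require Import all_boot all_algebra.
Set Implicit Arguments. Unset Strict Implicit. Unset Printing Implicit Defensive.
Import GRing.Theory.
Local Open Scope ring_scope.

(* A binary block code is given by a generator matrix whose rows are indexed
   by a finite type [I] (message coordinates) and whose columns are indexed by
   a finite type [N] (the nodes = codeword coordinates). *)
Section BlockCode.
Variables (I N : finType) (M : I -> N -> 'F_2).

Definition gcol (i : N) : {ffun I -> 'F_2} := [ffun r => M r i].

Definition encode (u : {ffun I -> 'F_2}) (i : N) : 'F_2 := \sum_r u r * M r i.

Definition correctable (S : {set N}) : Prop :=
  forall u v : {ffun I -> 'F_2},
    (forall i, i \notin S -> encode u i = encode v i) ->
    forall i, encode u i = encode v i.

Definition related (i : N) (J : {set N}) : Prop :=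
  i \notin J /\ gcol i = \sum_(j in J) gcol j.

Definition easy_repair (L : {set N}) (i : N) : Prop :=
  exists J : {set N}, [/\ (0 < #|J| <= 2)%N, J \subset L & related i J].

Definition allows_easy_repair (S : {set N}) : Prop :=
  exists p : seq N, perm_eq p (enum S) /\
    forall (p1 : seq N) (x : N) (p2 : seq N), p = p1 ++ x :: p2 ->
      easy_repair (~: S :|: [set y in p1]) x.

Definition easy_repair_property : Prop :=
  forall S : {set N}, correctable S -> allows_easy_repair S.
End BlockCode.

(* G : k x m with m = 2^k - 1; n = m + m = 2(2^k - 1). *)
Section UMSimplex.
Variables (k s : nat).
Notation m := (2 ^ k - 1)%N.

Definition G0 (G : 'M['F_2]_(k, m)) : 'M['F_2]_(k, m + m) := row_mx G G.
Definition G1 (G : 'M['F_2]_(k, m)) : 'M['F_2]_(k, m + m) := row_mx G 0.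

(* rows of G_total indexed by (block row i in 0..s, row a in 0..k-1),
   columns (nodes) by (block column j in 0..s+1, column b in 0..n-1) *)
Definition Gtotal (G : 'M['F_2]_(k, m))
  (r : 'I_s.+1 * 'I_k) (c : 'I_s.+2 * 'I_(m + m)) : 'F_2 :=
  if val c.1 == val r.1 then G0 G r.2 c.2
  else if val c.1 == (val r.1).+1 then G1 G r.2 c.2
  else 0.
End UMSimplex.

(* Main.v *)
Require Import Defs.
From mathcomp Require Import all_boot all_algebra zify.
From Stdlib Require Import Classical_Prop.
Set Implicit Arguments. Unset Strict Implicit. Unset Printing Implicit Defensive.
Import GRing.Theory.
Local Open Scope ring_scope.

Lemma F2_cases (x : 'F_2) : x = 0 \/ x = 1.
Proof.
have H : (nat_of_ord (x : 'I_2) < 2)%N by apply: ltn_ord.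
move: H; case E: (nat_of_ord x) => [|[|//]] _ ; [left|right]; apply/val_inj; rewrite /= E //.
Qed.
Lemma F2_char : (2 \in [pchar 'F_2])%N. Proof. exact: pchar_Fp. Qed.
Lemma F2_add (x : 'F_2) : x + x = 0.
Proof. exact: addrr_pchar2 F2_char x. Qed.
Lemma F2_neq0 (x : 'F_2) : x != 0 -> x = 1.
Proof. by case: (F2_cases x) => ->; rewrite ?eqxx. Qed.
Lemma F2_addK (x y : 'F_2) : x + y + y = x.
Proof. by rewrite -addrA F2_add addr0. Qed.

Section Generic.
Variables (I N : finType) (M : I -> N -> 'F_2).

Definition dot (u v : {ffun I -> 'F_2}) : 'F_2 := \sum_r u r * v r.

Lemma encode_dot u y : encode M u y = dot u (gcol M y).
Proof. by rewrite /encode /dot; apply: eq_bigr => r _; rewrite ffunE. Qed.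

Lemma vadd2 (w : {ffun I -> 'F_2}) : w + w = 0.
Proof. by apply/ffunP => r; rewrite !ffunE F2_add. Qed.
Lemma vaddK (w w' : {ffun I -> 'F_2}) : w + w' + w' = w.
Proof. by rewrite -addrA vadd2 addr0. Qed.

Lemma dotDl u1 u2 w : dot (u1 + u2) w = dot u1 w + dot u2 w.
Proof. by rewrite /dot -big_split; apply: eq_bigr => r _; rewrite ffunE mulrDl. Qed.
Lemma dotDr u w1 w2 : dot u (w1 + w2) = dot u w1 + dot u w2.
Proof. by rewrite /dot -big_split; apply: eq_bigr => r _; rewrite ffunE mulrDr. Qed.

Lemma sep (A : {set N}) (v : {ffun I -> 'F_2}) :
  (exists T : {set N}, T \subset A /\ v = \sum_(y in T) gcol M y) \/
  (exists u, (forall y, y \in A -> dot u (gcol M y) = 0) /\ dot u v != 0).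
Proof.
move: {2}#|A| (erefl #|A|) => n; elim: n A v => [|n IH] A v HA.
  have A0 : A = set0 by apply: cards0_eq.
  case: (eqVneq v 0) => [->|vn0].
    by left; exists set0; rewrite sub0set big_set0.
  right; case: (pickP (fun r => v r != 0)) => [r Hr|H0]; last first.
    case/eqP: vn0; apply/ffunP => r; rewrite ffunE.
    by move: (H0 r) => /= /negbFE /eqP.
  exists [ffun r' => (r' == r)%:R]; split; first by move=> y; rewrite A0 in_set0.
  rewrite /dot (bigD1 r) //= ffunE eqxx mul1r big1 ?addr0 // => r' /negbTE ne.
  by rewrite ffunE ne mul0r.
have : (0 < #|A|)%N by rewrite HA.
rewrite card_gt0 => /set0Pn [y yA].
have HA' : #|A :\ y| = n by move: HA; rewrite (cardsD1 y A) yA add1n => -[].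
have sub' : A :\ y \subset A by apply: subsetDl.
case: (IH (A :\ y) v HA') => [[T [TA ->]]|[u1 [u1A u1v]]].
  by left; exists T; split => //; apply: subset_trans sub'.
case: (IH (A :\ y) (v + gcol M y) HA') => [[T [TA HT]]|[u2 [u2A u2v]]].
  left; exists (y |: T); split.
    by rewrite subUset sub1set yA (subset_trans TA sub').
  have yT : y \notin T.
    by apply/negP => /(subsetP TA); rewrite in_setD1 eqxx.
  by rewrite big_setU1 //= -HT addrC vaddK.
right.
have HA1 z : z \in A -> z = y \/ z \in A :\ y.
  by move=> zA; case: (eqVneq z y) => [->|ne]; [left|right; rewrite in_setD1 ne].
case: (eqVneq (dot u1 (gcol M y)) 0) => [u1y|u1y].
  exists u1; split => // z /HA1 [->|]; [exact: u1y|exact: u1A].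
case: (eqVneq (dot u2 (gcol M y)) 0) => [u2y|u2y].
  exists u2; split; first by move=> z /HA1 [->|]; [exact: u2y|exact: u2A].
  by move: u2v; rewrite dotDr u2y addr0.
exists (u1 + u2); split.
  move=> z /HA1 [->|zA]; first by rewrite dotDl (F2_neq0 u1y) (F2_neq0 u2y) F2_add.
  by rewrite dotDl u1A // u2A // addr0.
rewrite dotDl.
have : dot u2 v = 0.
  move: u2v; rewrite dotDr (F2_neq0 u2y) => /F2_neq0 H.
  by rewrite -(F2_addK (dot u2 v) 1) H F2_add.
by move=> ->; rewrite addr0.
Qed.

Lemma easy_repair_mono (L L' : {set N}) x :
  L \subset L' -> easy_repair M L x -> easy_repair M L' x.
Proof.
by move=> sLL' [J [HJ JL rel]]; exists J; split => //; apply: subset_trans sLL'.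
Qed.

Lemma correctable_sub (S S' : {set N}) :
  S' \subset S -> correctable M S -> correctable M S'.
Proof.
move=> sub HS u v H; apply: HS => i iS; apply: H.
by apply: contra iS => /(subsetP sub).
Qed.

Lemma erp_of_key :
  (forall S, correctable M S -> S != set0 ->
     exists2 x, x \in S & easy_repair M (~: S) x) ->
  easy_repair_property M.
Proof.
move=> key S; move: {2}#|S| (erefl #|S|) => n; elim: n S => [|n IH] S HS cS.
  have S0 : S = set0 by apply: cards0_eq.
  exists [::]; split; first by rewrite S0 enum_set0.
  by case.
have Sn0 : S != set0 by apply/eqP => S0; move: HS; rewrite S0 cards0.
case: (key S cS Sn0) => x xS ex.
have HS' : #|S :\ x| = n by move: HS; rewrite (cardsD1 x S) xS add1n => -[].
have [p [pp Hp]] := IH (S :\ x) HS' (correctable_sub (subsetDl S [set x]) cS).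
exists (x :: p); split.
  apply: uniq_perm.
  - rewrite /= (perm_uniq pp) enum_uniq andbT.
    by rewrite (perm_mem pp) mem_enum in_setD1 eqxx.
  - exact: enum_uniq.
  - move=> z; rewrite in_cons (perm_mem pp) !mem_enum in_setD1.
    by case: (eqVneq z x) => [->|].
case=> [|y p1] z p2 /= [<-].
  by move=> _; apply: easy_repair_mono ex; apply: subsetUl.
move=> Ep; apply: easy_repair_mono (Hp p1 z p2 Ep).
apply/subsetP => w; rewrite !inE.
by case: (w \in S); case: (w == x); case: (w \in p1).
Qed.
End Generic.

Section UM.
Variables (k s : nat) (G : 'M['F_2]_(k, 2 ^ k - 1)).
Local Notation m := (2 ^ k - 1)%N.
Local Notation N := ('I_s.+2 * 'I_(m + m))%type.
Local Notation I := ('I_s.+1 * 'I_k)%type.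
Local Notation M := (@Gtotal k s G).
Local Notation gc := (gcol M).

Definition bcol (b : 'I_(m + m)) : 'I_m :=
  match split b with inl b' => b' | inr b' => b' end.
Definition isL (b : 'I_(m + m)) : bool := if split b is inl _ then true else false.
Definition gy (y : N) : 'cV['F_2]_k := col (bcol y.2) G.
Definition isR (i : nat) (y : N) : bool :=
  if isL y.2 then ((val y.1 == 0%N) && (i == 0%N)) || ((val y.1 == s.+1) && (i == s))
  else val y.1 == i.
Definition isD (i : nat) (y : N) : bool :=
  [&& isL y.2, val y.1 == i, (0 < i)%N & (i <= s)%N].
Definition mkR (i : nat) (h : 'cV['F_2]_k) : {ffun I -> 'F_2} :=
  [ffun r => if val r.1 == i then h r.2 0 else 0].
Definition mkD (i : nat) (h : 'cV['F_2]_k) : {ffun I -> 'F_2} :=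
  [ffun r => if (val r.1 == i) || ((val r.1).+1 == i) then h r.2 0 else 0].

Lemma splitL (b : 'I_m) : split (lshift m b) = inl b.
Proof. exact: (unsplitK (inl b)). Qed.
Lemma splitR (b : 'I_m) : split (rshift m b) = inr b.
Proof. exact: (unsplitK (inr b)). Qed.

Lemma node_ind (P : N -> Prop) :
  (forall j b, P (j, lshift m b)) -> (forall j b, P (j, rshift m b)) -> forall y, P y.
Proof.
move=> HL HR [j b]; rewrite -(splitK b); case: (split b) => b' /=; [exact: HL|exact: HR].
Qed.

Lemma gc_dec y (i : 'I_s.+1) a :
  gc y (i, a) = (if isR i y then gy y a 0 else 0) + (if isD i y then gy y a 0 else 0)
     + (if isD i.+1 y then gy y a 0 else 0).
Proof.
have lti := ltn_ord i.
have lis : (val i <= s)%N by [].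
elim/node_ind: y => j b; have ltj := ltn_ord j;
  rewrite ffunE /Gtotal /G0 /G1 /isR /isD /gy /isL /bcol /= ?splitL ?splitR
   ?row_mxEl ?row_mxEr !mxE.
- case E1: (val j == val i); case E2: (val j == (val i).+1); case E3: (val i == 0%N);
  case E4: (val j == 0%N); case E5: (val j == s.+1); case E6: (val i == s);
  case E7: (0 < val i)%N; case E8: (val i < s)%N;
  rewrite /= ?E7 ?E8 ?lis /= ?addr0 ?add0r ?F2_add //; lia.
- case E1: (val j == val i); case E2: (val j == (val i).+1);
  rewrite /= ?addr0 ?add0r //.
Qed.

Lemma ifsum3 (x : 'F_2) (b1 b2 b3 c : bool) : ~~ (b1 && b2) -> ~~ (b1 && b3) ->
  ~~ (b2 && b3) -> (b1 || b2 || b3) = c ->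
  (if b1 then x else 0) + (if b2 then x else 0) + (if b3 then x else 0) = (if c then x else 0).
Proof. by move=> h1 h2 h3 <-; case: b1 h1 h2; case: b2 h3; case: b3; rewrite /= ?addr0 ?add0r. Qed.

Lemma nodeR y (i : nat) : (i <= s)%N -> isR i y -> gc y = mkR i (gy y).
Proof.
move=> lis; elim/node_ind: y => j b; have ltj : (val j < s.+2)%N := ltn_ord j;
  move=> HR; apply/ffunP => -[i' a]; have lti' : (val i' < s.+1)%N := ltn_ord i';
  rewrite gc_dec ffunE /=; apply: ifsum3; move: HR;
  rewrite /isR /isD /isL /= ?splitL ?splitR; lia.
Qed.

Lemma nodeD y (i : nat) : isD i y -> gc y = mkD i (gy y).
Proof.
elim/node_ind: y => j b; have ltj : (val j < s.+2)%N := ltn_ord j;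
  move=> HR; apply/ffunP => -[i' a]; have lti' : (val i' < s.+1)%N := ltn_ord i';
  rewrite gc_dec ffunE /=; apply: ifsum3; move: HR;
  rewrite /isR /isD /isL /= ?splitL ?splitR; lia.
Qed.

Lemma vadd2' (w : {ffun I -> 'F_2}) : w + w = 0.
Proof. by apply/ffunP => r; rewrite !ffunE F2_add. Qed.
Lemma hadd2 (h : 'cV['F_2]_k) : h + h = 0.
Proof. by apply/matrixP => a b; rewrite !mxE F2_add. Qed.
Lemma hsolve (a b c : 'cV['F_2]_k) : a + b + c = 0 -> c = a + b.
Proof. by move=> H; rewrite -[c]add0r -H -addrA hadd2 addr0. Qed.

Lemma mkRD i h1 h2 : mkR i (h1 + h2) = mkR i h1 + mkR i h2.
Proof. by apply/ffunP => r; rewrite !ffunE; case: ifP; rewrite ?mxE ?addr0. Qed.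
Lemma mkDD i h1 h2 : mkD i (h1 + h2) = mkD i h1 + mkD i h2.
Proof. by apply/ffunP => r; rewrite !ffunE; case: ifP; rewrite ?mxE ?addr0. Qed.
Lemma mkR0 i : mkR i 0 = 0.
Proof. by apply/ffunP => r; rewrite !ffunE; case: ifP; rewrite ?mxE. Qed.
Lemma mkD0 i : mkD i 0 = 0.
Proof. by apply/ffunP => r; rewrite !ffunE; case: ifP; rewrite ?mxE. Qed.
Lemma triRD i h : mkR i h + mkD i.+1 h = mkR i.+1 h.
Proof.
apply/ffunP => r; rewrite !ffunE eqSS.
case E1: (val r.1 == i); case E2: (val r.1 == i.+1); rewrite /= ?addr0 ?add0r ?F2_add //; lia.
Qed.
Lemma triRD2 i h : mkD i.+1 h + mkR i.+1 h = mkR i h.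
Proof. by rewrite -triRD addrC -addrA vadd2' addr0. Qed.
Lemma triRD3 i h : mkR i h + mkR i.+1 h = mkD i.+1 h.
Proof. by rewrite -triRD addrA vadd2' add0r. Qed.

Lemma Gsurj (Gnz : forall j, col j G != 0) (Ginj : injective (fun j => col j G))
  (h : 'cV['F_2]_k) : h != 0 -> exists b, col b G = h.
Proof.
move=> hn0.
have cX : #|[set col j G | j : 'I_m]| = m by rewrite card_imset // card_ord.
have cY : #|[set~ (0 : 'cV['F_2]_k)]| = m.
  by rewrite cardsC1 card_mx card_Fp // muln1 subn1.
have sXY : [set col j G | j : 'I_m] \subset [set~ 0].
  by apply/subsetP => v /imsetP [j _ ->]; rewrite !inE Gnz.
have EXY : [set col j G | j : 'I_m] = [set~ 0].
  by apply/eqP; rewrite eqEcard sXY cX cY leqnn.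
have : h \in [set~ 0] by rewrite !inE hn0.
by rewrite -EXY => /imsetP [b _ ->]; exists b.
Qed.

Lemma gy_shift j b : gy (j, lshift m b) = col b G /\ gy (j, rshift m b) = col b G.
Proof. by rewrite /gy /bcol /= splitL splitR. Qed.

Lemma exR (Gnz : forall j, col j G != 0) (Ginj : injective (fun j => col j G))
  (i : nat) h : (i <= s)%N -> h != 0 -> exists z, gc z = mkR i h.
Proof.
move=> lis hn0; have [b Hb] := Gsurj Gnz Ginj hn0.
exists (inord i, rshift m b); rewrite (nodeR lis) ?(proj2 (gy_shift _ _)) ?Hb //.
by rewrite /isR /isL /= splitR inordK //; lia.
Qed.

Lemma exD (Gnz : forall j, col j G != 0) (Ginj : injective (fun j => col j G))
  (i : nat) h : (0 < i <= s)%N -> h != 0 -> exists z, gc z = mkD i h.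
Proof.
move=> lis hn0; have [b Hb] := Gsurj Gnz Ginj hn0.
exists (inord i, lshift m b); rewrite (nodeD (i := i)) ?(proj1 (gy_shift _ _)) ?Hb //.
by rewrite /isD /isL /= splitL inordK //; lia.
Qed.

Section Stuck.
Variables (Gnz : forall j, col j G != 0) (Ginj : injective (fun j => col j G)).
Variable S : {set N}.
Variable stuck : forall x, x \in S -> ~ easy_repair M (~: S) x.

Definition W (v : {ffun I -> 'F_2}) : Prop := v = 0 \/ exists2 y, y \in ~: S & gc y = v.

Lemma W0 : W 0. Proof. by left. Qed.

Lemma closeW v1 v2 : W v1 -> W v2 -> (v1 + v2 != 0 -> exists z, gc z = v1 + v2) ->
  W (v1 + v2).
Proof.
move=> [->|[y1 y1L E1]]; first by rewrite add0r.
move=> [->|[y2 y2L E2]]; first by rewrite addr0; right; exists y1.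
move=> Hz; case: (eqVneq (v1 + v2) 0) => [->|nz]; first by left.
case: (Hz nz) => z Ez.
case zL: (z \in ~: S); first by right; exists z.
exfalso; apply: (stuck (x := z)); first by move: zL; rewrite in_setC => /negbFE.
have ne : y1 != y2 by apply: contra nz => /eqP e; rewrite -E1 -E2 e vadd2'.
exists [set y1; y2]; split.
- by rewrite cards2 ne.
- by rewrite subUset !sub1set y1L y2L.
- split.
    rewrite !inE; apply/negP => /orP [] /eqP e; move: zL; rewrite e ?y1L ?y2L //.
  by rewrite Ez big_setU1 ?big_set1 ?E1 ?E2 // inE.
Qed.

Lemma single x : x \in S -> W (gc x) -> gc x = 0.
Proof.
move=> xS [//|[y yL E]]; exfalso; apply: (stuck xS).
exists [set y]; split.
- by rewrite cards1.
- by rewrite sub1set.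
- split; last by rewrite big_set1 E.
  by rewrite inE; apply/negP => /eqP e; move: yL; rewrite -e in_setC xS.
Qed.

Lemma nz_h (f : 'cV['F_2]_k -> {ffun I -> 'F_2}) h : f 0 = 0 -> f h != 0 -> h != 0.
Proof. by move=> f0; apply: contra => /eqP ->; rewrite f0. Qed.

Lemma WRadd i h1 h2 : (i <= s)%N -> W (mkR i h1) -> W (mkR i h2) -> W (mkR i (h1 + h2)).
Proof.
move=> lis w1 w2; rewrite mkRD; apply: closeW => // nz.
rewrite -mkRD; apply: (exR Gnz Ginj) => //; apply: (nz_h (f := mkR i)); rewrite ?mkR0 ?mkRD //.
Qed.

Lemma WDadd i h1 h2 : (0 < i <= s)%N -> W (mkD i h1) -> W (mkD i h2) -> W (mkD i (h1 + h2)).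
Proof.
move=> lis w1 w2; rewrite mkDD; apply: closeW => // nz.
rewrite -mkDD; apply: (exD Gnz Ginj) => //; apply: (nz_h (f := mkD i)); rewrite ?mkD0 ?mkDD //.
Qed.

Lemma tri1 i h : (i < s)%N -> W (mkR i h) -> W (mkD i.+1 h) -> W (mkR i.+1 h).
Proof.
move=> lis w1 w2; rewrite -triRD; apply: closeW => // nz.
by rewrite triRD; apply: (exR Gnz Ginj) => //; apply: (nz_h (f := mkR i.+1)); rewrite ?mkR0 // -(triRD i h).
Qed.

Lemma tri2 i h : (i < s)%N -> W (mkD i.+1 h) -> W (mkR i.+1 h) -> W (mkR i h).
Proof.
move=> lis w1 w2; rewrite -triRD2; apply: closeW => // nz.
rewrite triRD2; apply: (exR Gnz Ginj); first by lia.
by apply: (nz_h (f := mkR i)); rewrite ?mkR0 // -(triRD2 i h).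
Qed.

Lemma tri3 i h : (i < s)%N -> W (mkR i h) -> W (mkR i.+1 h) -> W (mkD i.+1 h).
Proof.
move=> lis w1 w2; rewrite -triRD3; apply: closeW => // nz.
rewrite triRD3; apply: (exD Gnz Ginj); first by lia.
by apply: (nz_h (f := mkD i.+1)); rewrite ?mkD0 // -(triRD3 i h).
Qed.


Lemma hsol1 (a b c : 'cV['F_2]_k) : a + b + c = 0 -> c = a + b.
Proof. by move=> H; rewrite -[c]add0r -H -addrA hadd2 addr0. Qed.
Lemma hsol2 (a b c : 'cV['F_2]_k) : a + b + c = 0 -> b = a + c.
Proof. by rewrite addrAC; apply: hsol1. Qed.
Lemma hsol3 (h a b c : 'cV['F_2]_k) : h = a + b + c -> h + c = a + b.
Proof. by move=> ->; rewrite -[_ + c + c]addrA hadd2 addr0. Qed.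
Lemma hsol4 (h a b c : 'cV['F_2]_k) : h = a + b + c -> h + b = a + c.
Proof. by move=> ->; rewrite [_ + b + c]addrAC -[_ + b + b]addrA hadd2 addr0. Qed.

Section Flow.
Variables (r t tg : nat -> 'cV['F_2]_k).
Variable Hr : forall i, (i <= s)%N -> W (mkR i (r i)).
Variable Ht : forall i, (0 < i <= s)%N -> W (mkD i (t i)).
Variable t0 : t 0 = 0.
Variable ts : t s.+1 = 0.
Variable Heq : forall i, (i <= s)%N -> tg i = r i + t i + t i.+1.

Lemma propA j : (j <= s)%N -> (forall i, (i < j)%N -> tg i = 0) ->
  forall i, (i <= j)%N -> W (mkR i (t i)).
Proof.
move=> ljs H0; elim=> [|i IH] lij; first by rewrite t0 mkR0; left.
have E0 : r i + t i + t i.+1 = 0.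
  by rewrite -Heq; [apply: H0; lia | lia].
have w1 : W (mkR i (t i.+1)).
  rewrite (hsol1 E0); apply: WRadd; [lia | apply: Hr; lia | apply: IH; lia].
apply: tri1; [lia | exact: w1 | apply: Ht; lia].
Qed.

Lemma propB j : (j <= s)%N -> (forall i, (j < i <= s)%N -> tg i = 0) ->
  forall d i, (i + d)%N = s -> (j <= i)%N -> W (mkR i (t i.+1)).
Proof.
move=> ljs H0; elim=> [|d IH] i Hid lji.
  by rewrite addn0 in Hid; rewrite Hid ts mkR0; left.
have IH' := IH i.+1 ltac:(lia) ltac:(lia).
have E0 : r i.+1 + t i.+1 + t i.+2 = 0.
  by rewrite -Heq; [apply: H0; lia | lia].
have w1 : W (mkR i.+1 (t i.+1)).
  rewrite (hsol2 E0); apply: WRadd; [lia | apply: Hr; lia | exact: IH'].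
apply: tri2; [lia | apply: Ht; lia | exact: w1].
Qed.

Lemma flowR j h : (j <= s)%N -> (forall i, (i <= s)%N -> tg i = if i == j then h else 0) ->
  W (mkR j h).
Proof.
move=> ljs Htg.
have wA : W (mkR j (t j)).
  apply: (propA ljs) => // i lij; rewrite Htg; last by lia.
  by case: eqP => //; lia.
have wB : W (mkR j (t j.+1)).
  have H0' : forall i, (j < i <= s)%N -> tg i = 0.
    by move=> i Hi; rewrite Htg; [case: eqP => //; lia | lia].
  exact: (@propB j ljs H0' (s - j)%N j ltac:(lia) (leqnn j)).
have -> : h = r j + t j + t j.+1 by rewrite -Heq // Htg // eqxx.
apply: WRadd => //; apply: WRadd => //; exact: Hr.
Qed.

Lemma flowD j h : (0 < j <= s)%N ->
  (forall i, (i <= s)%N -> tg i = if (i == j) || (i.+1 == j) then h else 0) ->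
  W (mkD j h).
Proof.
move=> ljs Htg.
have ej : j = (j.-1).+1 by lia.
have wA : W (mkR j.-1 (t j.-1)).
  have H0 : forall i, (i < j.-1)%N -> tg i = 0.
    move=> i lij; rewrite Htg; last by lia.
    by case: eqP => /=; [lia | case: eqP => //; lia].
  exact: (@propA j.-1 ltac:(lia) H0 j.-1 (leqnn _)).
have hA : h = r j.-1 + t j.-1 + t j.
  by rewrite {3}ej -Heq; [rewrite Htg; [rewrite -ej eqxx orbT | lia] | lia].
have wA' : W (mkR j.-1 (h + t j)).
  rewrite (hsol3 hA); apply: WRadd; [lia | apply: Hr; lia | exact: wA].
have wB : W (mkR j (t j.+1)).
  have H0' : forall i, (j < i <= s)%N -> tg i = 0.
    by move=> i Hi; rewrite Htg; [case: eqP => /=; [lia | case: eqP => //; lia] | lia].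
  exact: (@propB j ltac:(lia) H0' (s - j)%N j ltac:(lia) (leqnn j)).
have hB : h = r j + t j + t j.+1 by rewrite -Heq; [rewrite Htg; [rewrite eqxx | lia] | lia].
have wB' : W (mkR j (h + t j)).
  rewrite (hsol4 hB); apply: WRadd; [lia | apply: Hr; lia | exact: wB].
have wD : W (mkD j (h + t j)).
  have := @tri3 j.-1 (h + t j) ltac:(lia) wA'; rewrite -ej; apply; exact: wB'.
have -> : h = h + t j + t j by rewrite -addrA hadd2 addr0.
by apply: WDadd => //; apply: Ht.
Qed.
End Flow.

Lemma Wr (T : {set N}) i : T \subset ~: S -> (i <= s)%N ->
  W (mkR i (\sum_(y in T | isR i y) gy y)).
Proof.
move=> TL lis; apply: (big_rec (fun h => W (mkR i h))); first by rewrite mkR0; left.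
move=> y h /andP [yT yR] wh; apply: WRadd => //.
by right; exists y; [exact: (subsetP TL) | exact: nodeR].
Qed.

Lemma Wt (T : {set N}) i : T \subset ~: S -> (0 < i <= s)%N ->
  W (mkD i (\sum_(y in T | isD i y) gy y)).
Proof.
move=> TL lis; apply: (big_rec (fun h => W (mkD i h))); first by rewrite mkD0; left.
move=> y h /andP [yT yR] wh; apply: WDadd => //.
by right; exists y; [exact: (subsetP TL) | exact: nodeD].
Qed.

Lemma tz (T : {set N}) i : ~~ (0 < i <= s)%N -> \sum_(y in T | isD i y) gy y = 0.
Proof.
move=> Hi; apply: big1 => y /andP [_]; rewrite /isD => /and4P [_ _ h1 h2].
by exfalso; move: Hi; rewrite h1 h2.
Qed.

Lemma eqn_at (T : {set N}) x (i : 'I_s.+1) a : gc x = \sum_(y in T) gc y ->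
  gc x (i, a) = ((\sum_(y in T | isR i y) gy y) + (\sum_(y in T | isD i y) gy y)
     + (\sum_(y in T | isD i.+1 y) gy y)) a 0.
Proof.
move=> ->; rewrite sum_ffunE (eq_bigr _ (fun y _ => gc_dec y i a)) !big_split /=.
by rewrite !mxE !summxE !big_mkcondr.
Qed.

End Stuck.

Lemma mkR_nz i h : (i <= s)%N -> h != 0 -> mkR i h != 0.
Proof.
move=> lis; apply: contra => /eqP E; apply/eqP/matrixP => a b; rewrite (ord1 b).
have := congr1 (fun f : {ffun I -> 'F_2} => f (inord i, a)) E.
by rewrite !ffunE /= inordK // eqxx !mxE.
Qed.

Lemma classify x : gc x != 0 -> (exists2 j, (j <= s)%N & isR j x) \/ (exists j, isD j x).
Proof.
elim/node_ind: x => j b nz; have ltj : (val j < s.+2)%N := ltn_ord j.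
- case E0: (val j == 0%N).
    by left; exists 0%N => //; rewrite /isR /isL /= splitL E0.
  case E1: (val j == s.+1).
    by left; exists s => //; rewrite /isR /isL /= splitL E1 eqxx orbT.
  by right; exists (val j); rewrite /isD /isL /= splitL eqxx /=; change (0 < val j <= s)%N; lia.
- case E0: (val j <= s)%N.
    by left; exists (val j) => //; rewrite /isR /isL /= splitR.
  exfalso; move/eqP: nz; apply; apply/ffunP => -[i a].
  have lti : (val i < s.+1)%N := ltn_ord i.
  rewrite gc_dec /isR /isD /isL /= splitR ffunE.
  have -> : (val j == val i) = false by lia.
  by rewrite /= !addr0.
Qed.

Lemma key_stuck (Gnz : forall j, col j G != 0) (Ginj : injective (fun j => col j G))
  (mpos : (0 < m)%N) (S : {set N}) :
  (forall x, x \in S -> ~ easy_repair M (~: S) x) -> S != set0 -> correctable M S -> False.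
Proof.
move=> stuck Sn0 cS.
case: (pickP (fun x => (x \in S) && (gc x != 0))) => [x /andP [xS xn0] | H0]; last first.
  have /set0Pn [x0 x0S] := Sn0.
  pose b0 : 'I_m := Ordinal mpos.
  pose ya : N := (ord0, lshift m b0); pose yb : N := (ord0, rshift m b0).
  have Ea : gc ya = mkR 0 (col b0 G).
    by rewrite (nodeR (y := ya) (i := 0)) // ?(proj1 (gy_shift _ _)) // /isR /isL /= splitL.
  have Eb : gc yb = mkR 0 (col b0 G).
    by rewrite (nodeR (y := yb) (i := 0)) // ?(proj2 (gy_shift _ _)) // /isR /isL /= splitR.
  have nz : gc ya != 0 by rewrite Ea mkR_nz.
  have nzb : gc yb != 0 by rewrite Eb mkR_nz.
  have yaL : ya \in ~: S.
    by rewrite in_setC; move: (H0 ya) => /= /negbT; rewrite negb_and nz orbF.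
  have ybL : yb \in ~: S.
    by rewrite in_setC; move: (H0 yb) => /= /negbT; rewrite negb_and nzb orbF.
  have gx0 : gc x0 = 0.
    by move: (H0 x0) => /= /negbT; rewrite negb_and x0S /= negbK => /eqP.
  have := stuck x0 x0S; apply; exists [set ya; yb]; split.
  - by rewrite cards2 /ya /yb xpair_eqE eq_lrshift andbF.
  - by rewrite subUset !sub1set yaL ybL.
  - split.
      rewrite !inE; apply/negP => /orP [] /eqP e; [move: yaL|move: ybL];
        by rewrite -e in_setC x0S.
    rewrite big_setU1 /= ?big_set1 ?gx0 ?Ea ?Eb ?vadd2' //.
    by rewrite inE /ya /yb xpair_eqE eq_lrshift andbF.
case: (sep M (~: S) (gc x)) => [[T [TL HT]] | [u [uL ux]]]; last first.
  move/negP: ux; apply; apply/eqP; rewrite -encode_dot.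
  have -> : encode M u x = encode M 0 x.
    apply: cS => i iS; rewrite encode_dot uL ?in_setC //.
    by rewrite /encode big1 // => r _; rewrite ffunE mul0r.
  by rewrite /encode big1 // => r _; rewrite ffunE mul0r.
pose r i := \sum_(y in T | isR i y) gy y.
pose t i := \sum_(y in T | isD i y) gy y.
pose tg i := \col_a (gc x (inord i, a)).
have Hr : forall i, (i <= s)%N -> W S (mkR i (r i)) by move=> i; exact: Wr.
have Ht : forall i, (0 < i <= s)%N -> W S (mkD i (t i)).
  by move=> i; exact: (Wt Gnz Ginj stuck).
have t0 : t 0%N = 0 by apply: tz.
have ts : t s.+1 = 0 by apply: tz; lia.
have Heq : forall i, (i <= s)%N -> tg i = r i + t i + t i.+1.
  move=> i lis; apply/matrixP => a c; rewrite (ord1 c) mxE (eqn_at _ _ HT) inordK //.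
have single' := single stuck xS.
have Hr' := Hr.
case: (classify xn0) => [[j ljs jR] | [j jD]].
  have Ex := nodeR ljs jR.
  have := @flowR Gnz Ginj S stuck r t tg Hr' Ht t0 ts Heq j (gy x) ljs.
  move=> /(_ _) Hw; move/eqP: xn0; apply; apply: single'; rewrite Ex; apply: Hw.
  move=> i lis; apply/matrixP => a c; rewrite (ord1 c) !mxE Ex ffunE /= inordK //.
  by case: ifP; rewrite ?mxE.
have ljs : (0 < j <= s)%N by move: jD; rewrite /isD => /and4P [_ _ -> ->].
have Ex := nodeD jD.
have := @flowD Gnz Ginj S stuck r t tg Hr' Ht t0 ts Heq j (gy x) ljs.
move=> /(_ _) Hw; move/eqP: xn0; apply; apply: single'; rewrite Ex; apply: Hw.
move=> i lis; apply/matrixP => a c; rewrite (ord1 c) !mxE Ex ffunE /= inordK //.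
by case: ifP; rewrite ?mxE.
Qed.

End UM.

Theorem theorem5p2 (k : nat) (G : 'M['F_2]_(k, 2 ^ k - 1)) (s : nat) :
  (2 <= k)%N ->
  (forall j, col j G != 0) ->
  injective (fun j => col j G) ->
  easy_repair_property (@Gtotal k s G).
Proof.
move=> hk Gnz Ginj.
have mpos : (0 < 2 ^ k - 1)%N.
  have := ltn_expl k (ltnSn 1); set e := (2 ^ k)%N; lia.
apply: erp_of_key => S cS Sn0; apply: NNPP => Hn.
apply: (key_stuck Gnz Ginj mpos (S := S) _ Sn0 cS) => x xS ex.
by apply: Hn; exists x.
Qed.
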